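(* Let $\epsilon\in(0,1)$, $u_0\in\mathbb{R}$, $h>0$, and let $(u_n)_{n\ge0}$ be a sequence of real numbers starting at $u_0$ and satisfying the modified Crank–Nicolson scheme $$\frac{u_n-u_{n-1}}{h}+\frac{1}{\epsilon^2}\,\frac{u_n+u_{n-1}}{2}\left(\frac{u_n^2+u_{n-1}^2}{2}-1\right)=0,\qquad n\ge1.$$ (i) If $u_0\in\{0,1,-1\}$ and $h\le2\epsilon^2$, then $u_n=\mathrm{sign}(u_0)$ for all $n\ge1$. (ii) If $u_0\notin\{0,1,-1\}$, define $h^*=h^*(u_0,\epsilon)=\frac{4\epsilon^2}{u_0^2+2|u_0|+1}$ if $|u_0|>1$ and $h^*=\epsilon^2$ if $0<|u_0|<1$. Then $h^*>0$ and for every $h\in(0,h^*]$ the sequence $(u_n)$ is monotone and converges to $\mathrm{sign}(u_0)$ as $n\to\infty$.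
   Context: The scheme discretizes the ODE $u'(t)+\frac{1}{\epsilon^2}(u^3-u)=0$, $u(0)=u_0$; equivalently the nonlinear term is $\frac{F(u_n)-F(u_{n-1})}{u_n-u_{n-1}}$ with $F(u)=\frac14(u^2-1)^2$. For $h\le2\epsilon^2$ each step equation has a unique real solution. Here $\mathrm{sign}(0)=0$. *)

(* Defs.v *)
From Stdlib Require Import Reals Lra.
Open Scope R_scope.

Definition sgn (x : R) : R :=
  if Rlt_dec 0 x then 1 else if Rlt_dec x 0 then -1 else 0.

(* the modified Crank--Nicolson step relation between u_{n-1} = a and u_n = b *)
Definition mcn_step (eps h a b : R) : Prop :=
  (b - a) / h + / (eps ^ 2) * ((b + a) / 2) * ((b ^ 2 + a ^ 2) / 2 - 1) = 0.

(* threshold h^*(u0, eps); only meaningful for u0 not in {0,1,-1} *)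
Definition hstar (u0 eps : R) : R :=
  if Rlt_dec 1 (Rabs u0) then 4 * eps ^ 2 / (u0 ^ 2 + 2 * Rabs u0 + 1)
  else eps ^ 2.

Definition monotone_seq (u : nat -> R) : Prop :=
  (forall n, u n <= u (S n)) \/ (forall n, u (S n) <= u n).

(* Main.v *)
Require Import Defs.
From Stdlib Require Import Reals Lra Lia Psatz.
Open Scope R_scope.

Lemma step_poly eps h a b : 0 < eps -> 0 < h -> mcn_step eps h a b ->
  4 * eps^2 * (b - a) + h * ((b + a) * (b^2 + a^2 - 2)) = 0.
Proof.
  intros He Hh H. unfold mcn_step in H.
  assert (E : 0 < eps^2) by (apply pow_lt; lra).
  assert (X : 4 * eps^2 * h * ((b - a) / h + / eps ^ 2 * ((b + a) / 2) * ((b ^ 2 + a ^ 2) / 2 - 1)) = 0)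
    by (rewrite H; ring).
  rewrite <- X. field. lra.
Qed.

Lemma geo_cv (u : nat -> R) (L c : R) : 0 <= c < 1 ->
  (forall n, Rabs (u (S n) - L) <= c * Rabs (u n - L)) -> Un_cv u L.
Proof.
  intros Hc Hs.
  assert (B : forall n, Rabs (u n - L) <= c^n * Rabs (u 0%nat - L)).
  { induction n; simpl. lra.
    eapply Rle_trans. apply Hs. rewrite Rmult_assoc.
    apply Rmult_le_compat_l; lra. }
  intros e He.
  assert (P : 0 < e / (Rabs (u 0%nat - L) + 1)).
  { apply Rdiv_lt_0_compat; [lra| pose proof (Rabs_pos (u 0%nat - L)); lra]. }
  assert (Hc' : Rabs c < 1) by (rewrite Rabs_right; lra).
  destruct (pow_lt_1_zero c Hc' _ P) as [N HN].
  exists N. intros n Hn. unfold Rdist.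
  specialize (HN n Hn). specialize (B n).
  rewrite Rabs_right in HN by (apply Rle_ge, pow_le; lra).
  pose proof (Rabs_pos (u 0%nat - L)) as A.
  assert (HN' : c^n * (Rabs (u 0%nat - L) + 1) < e).
  { apply (Rmult_lt_compat_r (Rabs (u 0%nat - L) + 1)) in HN; [|lra].
    unfold Rdiv in HN. rewrite Rmult_assoc, Rinv_l, Rmult_1_r in HN; lra. }
  assert (0 <= c^n) by (apply pow_le; lra).
  nra.
Qed.

Lemma pos_case (E h u0 : R) (u : nat -> R) : 0 < E -> 0 < h -> 0 < u0 -> u0 <> 1 ->
  u 0%nat = u0 ->
  (1 < u0 -> h * (u0^2 + 2*u0 + 1) <= 4 * E) -> (u0 < 1 -> h <= E) ->
  (forall n, 4 * E * (u (S n) - u n) + h * ((u (S n) + u n) * (u (S n)^2 + u n^2 - 2)) = 0) ->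
  monotone_seq u /\ Un_cv u 1.
Proof.
  intros HE Hh Hu0 Hn1 H0 Hbig Hsmall Hs.
  assert (F1 : forall n, (u (S n) - u n) * (4*E + h*(u (S n)^2 + 2*u (S n)*u n + 3*u n^2 - 2))
     = 4*h*u n*(1 - u n^2)).
  { intro n. specialize (Hs n). nra. }
  assert (F2 : forall n, (u (S n) - 1) * (4*E + h*(u (S n)^2 + (u n+1)*u (S n) + u n^2 + u n - 1))
     = (u n - 1)*(4*E - h*(1 + u n)^2)).
  { intro n. specialize (Hs n). nra. }
  destruct (Rlt_dec u0 1) as [Hl|Hg].
  - specialize (Hsmall Hl).
    assert (Inv : forall n, u0 <= u n < 1 /\ u n < u (S n) /\
        2*E*(1 - u (S n)) <= (2*E - h*u0)*(1 - u n)).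
    { assert (Step : forall n, u0 <= u n < 1 -> u n < u (S n) < 1 /\
         2*E*(1 - u (S n)) <= (2*E - h*u0)*(1 - u n)).
      { intros n [Ha1 Ha2]. set (a := u n) in *. set (b := u (S n)) in *.
        pose proof (F1 n) as G1. pose proof (F2 n) as G2. fold a b in G1, G2.
        assert (Q : 0 < 4*E + h*(b^2 + 2*b*a + 3*a^2 - 2)).
        { assert (0 <= b^2 + 2*b*a + 3*a^2) by nra. nra. }
        assert (Hab : a < b).
        { assert (0 < 4*h*a*(1-a^2)).
          { apply Rmult_lt_0_compat; [nra|nra]. }
          nra. }
        assert (R0 : 0 < 4*E + h*(b^2 + (a+1)*b + a^2 + a - 1)).
        { assert (0 <= b^2 + (a+1)*b + a^2 + a) by nra. nra. }
        assert (N0 : 0 < 4*E - h*(1+a)^2).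
        { assert ((1+a)^2 < 4) by nra. nra. }
        assert (Hb1 : b < 1).
        { assert ((a-1)*(4*E - h*(1+a)^2) < 0) by nra. nra. }
        split; [lra|].
        set (q := b^2 + (a+1)*b + a^2 + a - 1) in *.
        assert (ql : 3*a^2 + 2*a - 1 <= q) by (unfold q; nra).
        assert (cp : 0 < 2*E - h*u0) by nra.
        assert (K : 2*E*(4*E - h*(1+a)^2) <= (2*E - h*u0)*(4*E + h*q)).
        { assert ((2*E - h*u0)*(4*E + h*(3*a^2+2*a-1)) <= (2*E - h*u0)*(4*E + h*q)).
          { apply Rmult_le_compat_l; [lra|]. nra. }
          assert (2*E*(4*E - h*(1+a)^2) <= (2*E - h*u0)*(4*E + h*(3*a^2+2*a-1))).
          { assert (3*a^2+2*a-1 <= 4) by nra.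
            assert (h*h <= E*h) by nra.
            assert (h*u0*h*(3*a^2+2*a-1) <= h*u0*h*4) by
              (apply Rmult_le_compat_l; [nra|lra]).
            assert (E*h*u0 <= E*h*a) by (apply Rmult_le_compat_l; nra).
            nra. }
          lra. }
        assert (G3 : (1-b)*(4*E + h*q) = (1-a)*(4*E - h*(1+a)^2)) by lra.
        assert (HH : 2*E*(1-b)*(4*E+h*q) <= (2*E - h*u0)*(1-a)*(4*E+h*q)).
        { replace (2*E*(1-b)*(4*E+h*q)) with ((1-a)*(2*E*(4*E - h*(1+a)^2))) by
            (rewrite <- Rmult_assoc; rewrite (Rmult_comm (1-a)); rewrite Rmult_assoc;
             rewrite <- G3; ring).
          replace ((2*E - h*u0)*(1-a)*(4*E+h*q)) with ((1-a)*((2*E - h*u0)*(4*E+h*q))) by ring.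
          apply Rmult_le_compat_l; lra. }
        apply Rmult_le_reg_r with (4*E+h*q); lra. }
      assert (I : forall n, u0 <= u n < 1).
      { induction n. rewrite H0; lra.
        destruct (Step n IHn) as [[A B] _]. lra. }
      intro n. destruct (Step n (I n)) as [A B]. split; [apply I|]. split; [lra|exact B]. }
    split.
    + left. intro n. destruct (Inv n) as [_ [A _]]. lra.
    + apply geo_cv with (c := (2*E - h*u0)/(2*E)).
      * split. apply Rmult_le_pos; [nra| left; apply Rinv_0_lt_compat; lra].
        apply (Rmult_lt_reg_r (2*E)); [lra|]. unfold Rdiv.
        rewrite Rmult_assoc, Rinv_l by lra. nra.
      * intro n. destruct (Inv n) as [[A1 A2] [A3 A4]]. destruct (Inv (S n)) as [[B1 B2] _].
        rewrite !Rabs_left by lra.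
        apply (Rmult_le_reg_l (2*E)); [lra|].
        replace (2*E*((2*E - h*u0)/(2*E) * - (u n - 1))) with ((2*E - h*u0)*(1 - u n)) by (field; lra).
        lra.
  - assert (Hb : 1 < u0) by lra. specialize (Hbig Hb).
    assert (hE : h < E).
    { assert (0 < h*(u0^2+2*u0+1-4)) by (apply Rmult_lt_0_compat; nra). nra. }
    assert (Inv : forall n, 1 <= u n <= u0 -> 1 <= u (S n) <= u n /\
        E*(u (S n) - 1) <= (E - h)*(u n - 1)).
    { intros n [Ha1 Ha2]. set (a := u n) in *. set (b := u (S n)) in *.
      pose proof (F1 n) as G1. pose proof (F2 n) as G2. fold a b in G1, G2.
      assert (Q : 0 < 4*E + h*(b^2 + 2*b*a + 3*a^2 - 2)).
      { assert (0 <= b^2 + 2*b*a + 3*a^2) by nra. nra. }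
      assert (Hab : b <= a).
      { assert (4*h*a*(1-a^2) <= 0).
        { assert (0 <= 4*h*a) by nra. assert (1 - a^2 <= 0) by nra. nra. }
        nra. }
      set (q := b^2 + (a+1)*b + a^2 + a - 1) in *.
      assert (ql : 0 <= q).
      { assert (4*q = (2*b+a+1)^2 + (3*a+5)*(a-1)) by (unfold q; ring).
        assert (0 <= (3*a+5)*(a-1)) by nra. pose proof (pow2_ge_0 (2*b+a+1)). lra. }
      assert (N0 : 0 <= 4*E - h*(1+a)^2).
      { assert ((1+a)^2 <= u0^2 + 2*u0 + 1) by nra. nra. }
      assert (Hb1 : 1 <= b).
      { assert (0 <= (a-1)*(4*E - h*(1+a)^2)) by (apply Rmult_le_pos; lra).
        assert (0 < 4*E + h*q) by nra.
        destruct (Rle_dec 1 b) as [?|Hn]; [lra|].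
        assert ((b-1)*(4*E+h*q) < 0) by (apply Rmult_neg_pos; lra). lra. }
      split; [lra|].
      assert (N1 : 4*E - h*(1+a)^2 <= 4*E - 4*h).
      { assert (4 <= (1+a)^2) by nra. assert (h*4 <= h*(1+a)^2) by (apply Rmult_le_compat_l; lra). lra. }
      assert ((b-1)*(4*E) <= (b-1)*(4*E+h*q)) by (apply Rmult_le_compat_l; nra).
      assert ((a-1)*(4*E - h*(1+a)^2) <= (a-1)*(4*E - 4*h)) by (apply Rmult_le_compat_l; lra).
      lra. }
    assert (I : forall n, 1 <= u n <= u0).
    { induction n. rewrite H0; lra.
      destruct (Inv n IHn) as [A _]. lra. }
    split.
    + right. intro n. destruct (Inv n (I n)) as [A _]. lra.
    + apply geo_cv with (c := (E - h)/E).
      * split. apply Rmult_le_pos; [lra| left; apply Rinv_0_lt_compat; lra].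
        apply (Rmult_lt_reg_r E); [lra|]. unfold Rdiv.
        rewrite Rmult_assoc, Rinv_l by lra. lra.
      * intro n. destruct (Inv n (I n)) as [A B]. pose proof (I (S n)). pose proof (I n).
        rewrite !Rabs_right by lra.
        apply (Rmult_le_reg_l E); [lra|].
        replace (E*((E - h)/E * (u n - 1))) with ((E - h)*(u n - 1)) by (field; lra).
        lra.
Qed.

Lemma hstar_opp x e : hstar (-x) e = hstar x e.
Proof. unfold hstar. rewrite Rabs_Ropp. replace ((-x)^2) with (x^2) by ring. reflexivity. Qed.

Lemma pos_case2 (eps h u0 : R) (u : nat -> R) : 0 < eps -> 0 < h -> 0 < u0 -> u0 <> 1 ->
  u 0%nat = u0 -> h <= hstar u0 eps ->
  (forall n, 4 * eps^2 * (u (S n) - u n) + h * ((u (S n) + u n) * (u (S n)^2 + u n^2 - 2)) = 0) ->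
  monotone_seq u /\ Un_cv u 1.
Proof.
  intros He Hh Hu Hn1 H0 Hhs Hs.
  assert (E : 0 < eps^2) by (apply pow_lt; lra).
  unfold hstar in Hhs. rewrite Rabs_right in Hhs by lra.
  apply (pos_case (eps^2) h u0); auto.
  - intro Hg. destruct (Rlt_dec 1 u0); [|lra].
    assert (D : 0 < u0^2 + 2*u0 + 1) by nra.
    apply (Rmult_le_compat_r (u0^2 + 2*u0 + 1)) in Hhs; [|lra].
    unfold Rdiv in Hhs. rewrite Rmult_assoc, Rinv_l in Hhs by lra. lra.
  - intro Hl. destruct (Rlt_dec 1 u0); [lra|]. lra.
Qed.

Theorem theorem3p5 (eps u0 h : R) (u : nat -> R)
  (Heps : 0 < eps < 1) (Hh : 0 < h) (Hu0 : u 0%nat = u0)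
  (Hscheme : forall n : nat, (1 <= n)%nat -> mcn_step eps h (u (n - 1)%nat) (u n)) :
  ((u0 = 0 \/ u0 = 1 \/ u0 = -1) -> h <= 2 * eps ^ 2 ->
     forall n : nat, (1 <= n)%nat -> u n = sgn u0)
  /\
  ((u0 <> 0 /\ u0 <> 1 /\ u0 <> -1) ->
     0 < hstar u0 eps /\
     (h <= hstar u0 eps -> monotone_seq u /\ Un_cv u (sgn u0))).
Proof.
  assert (E : 0 < eps^2) by (apply pow_lt; lra).
  assert (Hs : forall n, 4 * eps^2 * (u (S n) - u n) + h * ((u (S n) + u n) * (u (S n)^2 + u n^2 - 2)) = 0).
  { intro n. specialize (Hscheme (S n) ltac:(lia)).
    replace (S n - 1)%nat with n in Hscheme by lia.
    apply step_poly; [lra|lra|exact Hscheme]. }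
  split.
  - intros Hc Hh2.
    assert (All : forall n, u n = u0).
    { induction n. exact Hu0. specialize (Hs n). rewrite IHn in Hs.
      set (b := u (S n)) in *.
      destruct Hc as [-> | [-> | ->]].
      + assert (b * (4*eps^2 - 2*h + h*b^2) = 0) by lra.
        destruct (Rmult_integral _ _ H); [lra|].
        assert (0 <= h*b^2) by (pose proof (pow2_ge_0 b); nra).
        assert (h*b^2 = 0) by lra.
        destruct (Rmult_integral _ _ H2); [lra|].
        assert (b*b = 0) by lra. destruct (Rmult_integral _ _ H4); lra.
      + assert ((b-1) * (4*eps^2 + h*(b+1)^2) = 0) by lra.
        assert (0 <= h*(b+1)^2) by (pose proof (pow2_ge_0 (b+1)); nra).
        destruct (Rmult_integral _ _ H); lra.
      + assert ((b+1) * (4*eps^2 + h*(b-1)^2) = 0) by lra.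
        assert (0 <= h*(b-1)^2) by (pose proof (pow2_ge_0 (b-1)); nra).
        destruct (Rmult_integral _ _ H); lra. }
    intros n _. rewrite All. unfold sgn.
    destruct Hc as [-> | [-> | ->]];
      repeat (destruct Rlt_dec); lra.
  - intros [N0 [N1 N2]]. split.
    + unfold hstar. destruct Rlt_dec.
      * apply Rdiv_lt_0_compat; [lra|]. pose proof (Rabs_pos u0). nra.
      * exact E.
    + intro Hhs. destruct (Rlt_dec 0 u0) as [Hp|Hn].
      * assert (sgn u0 = 1) by (unfold sgn; destruct Rlt_dec; lra). rewrite H.
        apply (pos_case2 eps h u0); auto; lra.
      * assert (sgn u0 = -1) by (unfold sgn; repeat destruct Rlt_dec; lra). rewrite H.
        destruct (pos_case2 eps h (-u0) (fun n => - u n)) as [M C]; try lra.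
        -- rewrite hstar_opp; exact Hhs.
        -- intro n. specialize (Hs n). lra.
        -- split.
           ++ destruct M as [M|M]; [right|left]; intro n; specialize (M n); lra.
           ++ intros e He0. destruct (C e He0) as [K HK]. exists K. intros n Hn2.
              specialize (HK n Hn2). unfold Rdist in *.
              replace (u n - -1) with (-(- u n - 1)) by ring. rewrite Rabs_Ropp. exact HK.
Qed.
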